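(* Let $(L,\wedge,\vee,0,1)$ be a bounded lattice with additive Nakano mosaic $(L,\boxplus,0)$, where $x\boxplus y:=\{z\in L\mid x\vee y=x\vee z=z\vee y\}$. For $x,y,z\in L$, we have $z=x\vee y$ if and only if $x,y\in z\boxplus z$ and $z\in x\boxplus y$. *)

(* Defs.v *)
From HB Require Import structures.
From mathcomp Require Import all_boot all_order.
Set Implicit Arguments. Unset Strict Implicit. Unset Printing Implicit Defensive.
Import Order.TTheory.
Local Open Scope order_scope.

Definition nakano_add (d : Order.disp_t) (L : latticeType d) (x y : L) : pred L :=
  fun z => (x `|` y == x `|` z) && (x `|` z == z `|` y).

(* Main.v *)
Require Import Defs.
From HB Require Import structures.
From mathcomp Require Import all_boot all_order.
Local Open Scope order_scope.
Import Order.TTheory.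

Theorem mainTheorem17 (d : Order.disp_t) (L : tbLatticeType d) (x y z : L) :
  z = x `|` y <->
  (x \in nakano_add z z /\ y \in nakano_add z z /\ z \in nakano_add x y).
Proof.
rewrite /nakano_add /in_mem /=; split.
- move=> ->; rewrite !joinxx.
  have hx : x `|` y `|` x = x `|` y by rewrite joinAC joinxx.
  have hy : x `|` y `|` y = x `|` y by rewrite -joinA joinxx.
  have hx' : x `|` (x `|` y) = x `|` y by rewrite joinA joinxx.
  rewrite ?hx ?hy ?hx' ?[y `|` (x `|` y)]joinC ?hx ?hy.
  by rewrite !eqxx.
- rewrite !joinxx => -[/andP[/eqP zx /eqP zx']] [/andP[/eqP zy /eqP zy']] /andP[/eqP e _].
  have hx : x `|` z = z by rewrite joinC -zx.
  by rewrite e hx.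
Qed.
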